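(* Let $\theta=\sqrt{b/a}>1$ with $a,b$ coprime positive integers, $\theta\notin\mathbb{Q}$. Let $\varepsilon>\eta>0$ and suppose the open interval $\,]2\sqrt{ab}\,\theta^{-2}\eta,\ 2\sqrt{ab}\,\theta^{-2}\varepsilon[\,$ contains $|m|$ for some integer $m$ such that the equation $ax^2-by^2=m$ has a primitive integer solution (i.e. with $\gcd(x,y)=1$). Then there exists a sequence $B_n\to\infty$ with $$\delta_{\theta,B_n,1/2}(\chi_{\varepsilon,\eta})\ge1\quad\text{for all }n\ge1.$$
   Context: On $\mathbb{P}^1(\mathbb{Q})$ use $H([u:v])=\max(|u|,|v|)$ with $u,v$ coprime integers. For real $\theta$, $r>0$, $B>0$ and compactly supported $f$ on $\mathbb{R}$, $\delta_{\theta,B,r}(f)=\sum_{[u:v]\in\mathbb{P}^1(\mathbb{Q}),v\ne0,H([u:v])\le B}f(B^{1/r}(u/v-\theta))$. For $\varepsilon>\eta\ge0$, $\chi_{\varepsilon,\eta}$ is the indicator of $\{t:\eta<|t|\le\varepsilon\}$. *)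

(* Defs.v *)
From Stdlib Require Import Reals Lra Lia ZArith List.
Open Scope R_scope.

Definition height (u v : Z) : R := Rmax (IZR (Z.abs u)) (IZR (Z.abs v)).

(* Each point [u:v] of P^1(Q) with v <> 0 has a unique representative
   (u,v) with gcd(u,v)=1 and v > 0.  We enumerate a box containing all
   such representatives of height <= B and keep those of height <= B. *)
Definition box (K : Z) : list (Z * Z) :=
  list_prod (map (fun k => (k - K)%Z) (map Z.of_nat (seq 0 (Z.to_nat (2 * K + 1)))))
            (map (fun k => (k + 1)%Z) (map Z.of_nat (seq 0 (Z.to_nat K)))).

Definition rat_points (B : R) : list (Z * Z) :=
  filter (fun p => andb (Z.eqb (Z.gcd (fst p) (snd p)) 1)
                        (if Rle_dec (height (fst p) (snd p)) B then true else false))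
         (box (up B)).

Definition delta (theta B r : R) (f : R -> R) : R :=
  fold_right Rplus 0
    (map (fun p => f (Rpower B (1 / r) * (IZR (fst p) / IZR (snd p) - theta)))
         (rat_points B)).

Definition chi (eps eta : R) (t : R) : R :=
  if Rlt_dec eta (Rabs t) then (if Rle_dec (Rabs t) eps then 1 else 0) else 0.

(* Main.v *)
Require Import Defs.
From Stdlib Require Import Reals ZArith.
From Stdlib Require Import Lra Lia List Classical.
Open Scope R_scope.


Lemma pigeon (f : nat -> nat) (n M : nat) :
  (M < n)%nat -> (forall k, (k < n)%nat -> (f k < M)%nat) ->
  exists i j, (i < j < n)%nat /\ f i = f j.
Proof.
  intros HMn Hf.
  destruct (classic (exists i j, (i < j < n)%nat /\ f i = f j)) as [H|H]; [exact H|].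
  exfalso.
  assert (ND : NoDup (map f (seq 0 n))).
  { apply (NoDup_nth _ 0%nat). rewrite length_map, length_seq. intros i j Hi Hj E.
    rewrite (nth_indep (map f (seq 0 n)) 0%nat (f 0%nat)) in E by (rewrite length_map, length_seq; lia).
    rewrite (nth_indep (map f (seq 0 n)) 0%nat (f 0%nat)) in E by (rewrite length_map, length_seq; lia).
    rewrite !map_nth, !seq_nth in E by lia. simpl in E.
    destruct (Nat.lt_trichotomy i j) as [L|[L|L]]; auto; exfalso; apply H.
    - exists i, j. split; [lia|auto].
    - exists j, i. split; [lia|auto]. }
  assert (Inc : incl (map f (seq 0 n)) (seq 0 M)).
  { intros x Hx. apply in_map_iff in Hx. destruct Hx as [k [<- Hk]].
    apply in_seq in Hk. apply in_seq. specialize (Hf k). lia. }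
  pose proof (NoDup_incl_length ND Inc). rewrite length_map, !length_seq in H0. lia.
Qed.

Lemma Int_part_spec (r : R) : IZR (Int_part r) <= r < IZR (Int_part r) + 1.
Proof. destruct (base_Int_part r). lra. Qed.

Lemma dirichlet (s : R) (N : nat) : (1 <= N)%nat ->
  exists p q : Z, (1 <= q <= Z.of_nat N)%Z /\ Rabs (IZR q * s - IZR p) < / INR N.
Proof.
  intros HN.
  assert (HNp : 0 < INR N) by (apply lt_0_INR; lia).
  set (g := fun k : nat => INR N * (INR k * s - IZR (Int_part (INR k * s)))).
  assert (Hg : forall k, 0 <= g k < INR N).
  { intros k. unfold g. pose proof (Int_part_spec (INR k * s)). split; nra. }
  set (f := fun k => Z.to_nat (Int_part (g k))).
  assert (Hb : forall k, (0 <= Int_part (g k) < Z.of_nat N)%Z).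
  { intros k. pose proof (Int_part_spec (g k)). pose proof (Hg k).
    split.
    - apply le_IZR. assert (IZR (Int_part (g k)) > -1) by lra.
      apply lt_IZR in H1. apply IZR_le. lia.
    - apply lt_IZR. rewrite <- INR_IZR_INZ. lra. }
  destruct (pigeon f (S N) N) as [i [j [Hij E]]]; [lia| |].
  { intros k _. unfold f. specialize (Hb k). lia. }
  unfold f in E. pose proof (Hb i) as Hi. pose proof (Hb j) as Hj.
  apply Z2Nat.inj in E; try lia.
  exists (Int_part (INR j * s) - Int_part (INR i * s))%Z, (Z.of_nat j - Z.of_nat i)%Z.
  split; [lia|].
  pose proof (Int_part_spec (g i)). pose proof (Int_part_spec (g j)).
  rewrite E in H.
  assert (Habs : Rabs (g j - g i) < 1) by (apply Rabs_def1; lra).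
  unfold g in Habs.
  rewrite minus_IZR, minus_IZR, <- !INR_IZR_INZ.
  replace (INR N * (INR j * s - IZR (Int_part (INR j * s))) -
        INR N * (INR i * s - IZR (Int_part (INR i * s))))
    with (INR N * ((INR j - INR i) * s - (IZR (Int_part (INR j * s)) - IZR (Int_part (INR i * s))))) in Habs by ring.
  rewrite Rabs_mult, (Rabs_right (INR N)) in Habs by lra.
  apply (Rmult_lt_reg_l (INR N)); auto. rewrite Rinv_r by lra. exact Habs.
Qed.

Lemma decode (C a1 a2 r1 r2 : Z) : (0 <= r1 < C)%Z -> (0 <= r2 < C)%Z ->
  (a1 * C + r1 = a2 * C + r2)%Z -> a1 = a2 /\ r1 = r2.
Proof.
  intros H1 H2 E.
  assert (a1 = a2).
  { destruct (Z.lt_trichotomy a1 a2) as [L|[L|L]]; auto.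
    - assert (a1 * C + C <= a2 * C)%Z by (replace (a1*C+C)%Z with ((a1+1)*C)%Z by ring; apply Z.mul_le_mono_nonneg_r; lia). lia.
    - assert (a2 * C + C <= a1 * C)%Z by (replace (a2*C+C)%Z with ((a2+1)*C)%Z by ring; apply Z.mul_le_mono_nonneg_r; lia). lia. }
  subst. lia.
Qed.

Lemma pell_pair (d p q p' q' N : Z) : N <> 0%Z ->
  (p*p - d*q*q = N)%Z -> (p'*p' - d*q'*q' = N)%Z -> (N | p - p')%Z -> (N | q - q')%Z ->
  (1 <= q)%Z -> (1 <= q')%Z -> (p, q) <> (p', q') ->
  exists X Y, (X*X - d*Y*Y = 1)%Z /\ Y <> 0%Z.
Proof.
  intros HN E1 E2 [u Hu] [v Hv] Hq Hq' Hne.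
  assert (D1 : (N | p*p' - d*q*q')%Z).
  { exists (1 - p*u + d*q*v)%Z.
    replace p' with (p - u*N)%Z by lia. replace q' with (q - v*N)%Z by lia.
    replace (p*(p-u*N) - d*q*(q-v*N))%Z with ((p*p - d*q*q) - p*u*N + d*q*v*N)%Z by ring.
    rewrite E1. ring. }
  assert (D2 : (N | q*p' - p*q')%Z).
  { exists (- q*u + p*v)%Z.
    replace p' with (p - u*N)%Z by lia. replace q' with (q - v*N)%Z by lia. ring. }
  destruct D1 as [X HX]. destruct D2 as [Y HY].
  exists X, Y. split.
  - assert (K : ((p*p'-d*q*q')*(p*p'-d*q*q') - d*(q*p'-p*q')*(q*p'-p*q') = (p*p-d*q*q)*(p'*p'-d*q'*q'))%Z) by ring.
    rewrite HX, HY, E1, E2 in K.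
    assert (K2 : ((X*X - d*Y*Y - 1) * (N*N) = 0)%Z).
    { replace ((X*X - d*Y*Y - 1) * (N*N))%Z with ((X*N)*(X*N) - d*(Y*N)*(Y*N) - N*N)%Z by ring. lia. }
    apply Z.mul_eq_0 in K2. destruct K2 as [K2|K2]; [lia|].
    apply Z.mul_eq_0 in K2. lia.
  - intros ->. apply Hne.
    assert (H : (q*p' = p*q')%Z) by lia.
    assert (H0 : (q*q*N = q'*q'*N)%Z).
    { replace (q*q*N)%Z with (q*q*(p'*p'-d*q'*q'))%Z by (rewrite E2; ring).
      replace (q'*q'*N)%Z with (q'*q'*(p*p-d*q*q))%Z by (rewrite E1; ring).
      replace (q*q*(p'*p'-d*q'*q'))%Z with ((q*p')*(q*p') - d*q*q*q'*q')%Z by ring.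
      rewrite H. ring. }
    apply Z.mul_cancel_r in H0; auto.
    assert (H1 : ((q - q') * (q + q') = 0)%Z) by (replace ((q - q') * (q + q'))%Z with (q*q - q'*q')%Z by ring; lia).
    apply Z.mul_eq_0 in H1. assert (q = q') by lia. subst.
    assert (p = p') by (apply (Z.mul_cancel_l _ _ q'); lia). subst. reflexivity.
Qed.

Section Pell.
Variable d : Z.
Hypothesis Hd : (0 < d)%Z.
Hypothesis Hirr : forall p q : Z, (1 <= q)%Z -> IZR q * sqrt (IZR d) <> IZR p.
Let s := sqrt (IZR d).
Definition err (pq : Z * Z) := Rabs (IZR (snd pq) * sqrt (IZR d) - IZR (fst pq)).
Definition good (pq : Z * Z) := (1 <= snd pq)%Z /\ err pq < / IZR (snd pq).

Lemma s_pos : 0 < s.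
Proof. unfold s. apply sqrt_lt_R0. apply IZR_lt. exact Hd. Qed.

Lemma s_sq : s * s = IZR d.
Proof. unfold s. apply sqrt_sqrt. apply IZR_le. lia. Qed.

Lemma err_pos pq : (1 <= snd pq)%Z -> 0 < err pq.
Proof.
  intros H. unfold err. apply Rabs_pos_lt. intro E. apply (Hirr (fst pq) (snd pq) H). lra.
Qed.

Lemma approx (e : R) : 0 < e -> exists pq, good pq /\ err pq < e.
Proof.
  intros He.
  set (N := S (Z.to_nat (up (/ e)))).
  destruct (dirichlet (sqrt (IZR d)) N) as [p [q [Hq Hpq]]]; [unfold N; lia|].
  exists (p, q). unfold good, err; simpl.
  assert (HN1 : / e < INR N).
  { unfold N. rewrite S_INR. destruct (archimed (/ e)) as [A _].
    destruct (Z_le_gt_dec 0 (up (/ e))) as [L|L].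
    - rewrite INR_IZR_INZ, Z2Nat.id by lia. lra.
    - assert (/ e > 0) by (apply Rinv_0_lt_compat; lra). apply Z.gt_lt in L. apply IZR_lt in L.
      pose proof (pos_INR (Z.to_nat (up (/ e)))). lra. }
  assert (Hq1 : 1 <= IZR q) by (apply IZR_le; lia).
  assert (HqN : IZR q <= INR N) by (rewrite INR_IZR_INZ; apply IZR_le; lia).
  split; [split; [lia|]|].
  - eapply Rlt_le_trans; [exact Hpq|]. apply Rinv_le_contravar; lra.
  - eapply Rlt_trans; [exact Hpq|].
    rewrite <- (Rinv_inv e). apply Rinv_lt_contravar; [|exact HN1].
    apply Rmult_lt_0_compat; [apply Rinv_0_lt_compat; lra|lra].
Qed.

Lemma family (n : nat) : exists l e, 0 < e /\ length l = n /\ NoDup l /\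
  Forall good l /\ Forall (fun pq => e <= err pq) l.
Proof.
  induction n as [|n IH].
  - exists nil, 1. repeat split; auto; try lra; constructor.
  - destruct IH as [l [e [He [Hl [ND [G E]]]]]].
    destruct (approx e He) as [pq [Gpq Epq]].
    exists (pq :: l), (err pq). split; [apply err_pos; apply Gpq|].
    split; [simpl; lia|]. split; [|split].
    + constructor; auto. intro Hin. rewrite Forall_forall in E. specialize (E pq Hin). lra.
    + constructor; auto.
    + constructor; [lra|]. rewrite Forall_forall in *. intros x Hx. specialize (E x Hx). lra.
Qed.

Definition normZ (pq : Z * Z) := (fst pq * fst pq - d * snd pq * snd pq)%Z.

Lemma good_bound pq : good pq -> IZR (Z.abs (normZ pq)) < 2 * s + 1.
Proof.
  destruct pq as [p q]. unfold good, err, normZ; simpl. intros [Hq He].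
  fold s in He.
  assert (Hq1 : 1 <= IZR q) by (apply IZR_le; lia).
  pose proof s_pos as Hs. pose proof s_sq as Hss.
  rewrite abs_IZR, minus_IZR, !mult_IZR.
  replace (IZR p * IZR p - IZR d * IZR q * IZR q) with ((IZR p - IZR q * s) * (IZR p + IZR q * s))
    by (rewrite <- Hss; ring).
  rewrite Rabs_mult.
  assert (A1 : Rabs (IZR p - IZR q * s) < / IZR q) by (rewrite Rabs_minus_sym; exact He).
  assert (A2 : Rabs (IZR p + IZR q * s) <= Rabs (IZR p - IZR q * s) + 2 * (IZR q * s)).
  { replace (IZR p + IZR q * s) with ((IZR p - IZR q * s) + 2 * (IZR q * s)) by ring.
    eapply Rle_trans; [apply Rabs_triang|]. rewrite (Rabs_right (2 * _)); [lra|]. nra. }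
  set (a := Rabs (IZR p - IZR q * s)) in *.
  assert (0 <= a) by apply Rabs_pos.
  assert (Hiq : 0 < / IZR q <= 1) by (split; [apply Rinv_0_lt_compat; lra|rewrite <- Rinv_1; apply Rinv_le_contravar; lra]).
  assert (Hqiq : IZR q * / IZR q = 1) by (field; lra).
  apply Rle_lt_trans with (a * (a + 2 * (IZR q * s))).
  { apply Rmult_le_compat_l; auto. }
  assert (aq : a * IZR q < 1).
  { rewrite <- Hqiq. rewrite (Rmult_comm (IZR q)). apply Rmult_lt_compat_r; lra. }
  assert (a2 : a * a < 1) by nra.
  replace (a * (a + 2 * (IZR q * s))) with (a * a + 2 * s * (a * IZR q)) by ring.
  nra.
Qed.

Lemma norm_nz pq : good pq -> normZ pq <> 0%Z.
Proof.
  destruct pq as [p q]. unfold good, normZ; simpl. intros [Hq _] E.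
  assert (E' : IZR p * IZR p = IZR d * IZR q * IZR q) by (rewrite <- !mult_IZR; f_equal; lia).
  pose proof s_pos. pose proof s_sq.
  assert (Hq1 : 1 <= IZR q) by (apply IZR_le; lia).
  apply (Hirr (Z.abs p) q Hq). fold s. rewrite abs_IZR.
  assert (F : (IZR q * s - Rabs (IZR p)) * (IZR q * s + Rabs (IZR p)) = 0).
  { replace ((IZR q * s - Rabs (IZR p)) * (IZR q * s + Rabs (IZR p))) with
      (IZR q * IZR q * (s * s) - Rabs (IZR p) * Rabs (IZR p)) by ring.
    rewrite <- Rabs_mult, Rabs_right by nra. rewrite H0. lra. }
  apply Rmult_integral in F. destruct F as [F|F]; [lra|].
  pose proof (Rabs_pos (IZR p)). nra.
Qed.


Lemma mod_div (p p' n : Z) : n <> 0%Z -> (p mod Z.abs n = p' mod Z.abs n)%Z -> (n | p - p')%Z.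
Proof.
  intros Hn E. apply Z.divide_abs_l.
  assert (Ha : Z.abs n <> 0%Z) by lia.
  pose proof (Z.div_mod p _ Ha). pose proof (Z.div_mod p' _ Ha).
  exists (p / Z.abs n - p' / Z.abs n)%Z. lia.
Qed.

Theorem pell : exists X Y, (X*X - d*Y*Y = 1)%Z /\ Y <> 0%Z.
Proof.
  set (C := up (2 * s + 1)).
  pose proof s_pos as Hs.
  assert (HC : 2 * s + 1 < IZR C) by (destruct (archimed (2*s+1)); unfold C; lra).
  assert (HC1 : (1 <= C)%Z) by (apply le_IZR; lra).
  set (cls := fun pq : Z * Z => Z.to_nat (((normZ pq + C) * C + fst pq mod Z.abs (normZ pq)) * C
                                           + snd pq mod Z.abs (normZ pq))).
  set (M := Z.to_nat (2*C*C*C)).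
  destruct (family (S M)) as [l [e [_ [Hl [ND [G _]]]]]].
  assert (Gk : forall k, (k < S M)%nat -> good (nth k l (0%Z,1%Z))).
  { intros k Hk. rewrite Forall_forall in G. apply G. apply nth_In. lia. }
  assert (Bk : forall pq, good pq -> (normZ pq <> 0 /\ Z.abs (normZ pq) < C)%Z).
  { intros pq Gpq. split; [apply norm_nz; auto|].
    apply lt_IZR. pose proof (good_bound pq Gpq). fold s in H. lra. }
  assert (Rk : forall pq, good pq -> (0 <= fst pq mod Z.abs (normZ pq) < C)%Z /\
                                      (0 <= snd pq mod Z.abs (normZ pq) < C)%Z /\
                                      (0 <= (normZ pq + C) * C + fst pq mod Z.abs (normZ pq) < 2*C*C)%Z).
  { intros pq Gpq. destruct (Bk pq Gpq) as [B1 B2].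
    pose proof (Z.mod_pos_bound (fst pq) (Z.abs (normZ pq)) ltac:(lia)).
    pose proof (Z.mod_pos_bound (snd pq) (Z.abs (normZ pq)) ltac:(lia)).
    split; [lia|]. split; [lia|].
    assert (0 <= normZ pq + C <= 2*C - 1)%Z by lia.
    split; nia. }
  destruct (pigeon (fun k => cls (nth k l (0%Z,1%Z))) (S M) M) as [i [j [Hij E]]]; [lia| |].
  { intros k Hk. specialize (Rk _ (Gk k Hk)).
    destruct Rk as [R1 [R2 R3]]. unfold cls, M.
    apply Z2Nat.inj_lt; nia. }
  pose proof (Gk i ltac:(lia)) as Gi. pose proof (Gk j ltac:(lia)) as Gj.
  destruct (Rk _ Gi) as [Ri1 [Ri2 Ri3]]. destruct (Rk _ Gj) as [Rj1 [Rj2 Rj3]].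
  unfold cls in E. apply Z2Nat.inj in E; try nia.
  apply decode in E; auto. destruct E as [E1 E2].
  apply decode in E1; auto. destruct E1 as [E3 E4].
  assert (EN : normZ (nth i l (0%Z,1%Z)) = normZ (nth j l (0%Z,1%Z))) by lia.
  destruct (nth i l (0%Z,1%Z)) as [p q] eqn:Hi.
  destruct (nth j l (0%Z,1%Z)) as [p' q'] eqn:Hj.
  simpl in *. rewrite <- EN in E2, E4.
  destruct (Bk _ Gi) as [Nz _].
  apply (pell_pair d p q p' q' (normZ (p,q))); auto.
  - apply mod_div; auto.
  - apply mod_div; auto.
  - apply Gi.
  - apply Gj.
  - intro Heq. rewrite <- Heq in Hj. rewrite <- Hj in Hi.
    apply (NoDup_nth l (0%Z,1%Z)) in Hi; [lia|exact ND|lia|lia].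
Qed.

End Pell.

Definition step (a b X Y : Z) (pq : Z * Z) : Z * Z :=
  (X * fst pq + b * Y * snd pq, a * Y * fst pq + X * snd pq)%Z.

Definition orbit (a b X Y x0 y0 : Z) (n : nat) : Z * Z := Nat.iter n (step a b X Y) (x0, y0).

Lemma orbit_inv (a b X Y x0 y0 : Z) :
  (1 <= a)%Z -> (1 <= b)%Z -> (2 <= X)%Z -> (1 <= Y)%Z -> (X*X - a*b*Y*Y = 1)%Z ->
  (0 <= x0)%Z -> (0 <= y0)%Z -> (1 <= x0 + y0)%Z -> Z.gcd x0 y0 = 1%Z ->
  forall n, let pq := orbit a b X Y x0 y0 n in
  (0 <= fst pq)%Z /\ (0 <= snd pq)%Z /\ (1 <= fst pq + snd pq)%Z /\ (Z.of_nat n <= snd pq)%Z /\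
  (a * fst pq * fst pq - b * snd pq * snd pq = a * x0 * x0 - b * y0 * y0)%Z /\
  Z.gcd (fst pq) (snd pq) = 1%Z.
Proof.
  intros Ha Hb HX HY HP Hx0 Hy0 Hs0 Hg0 n. induction n as [|n IH]; simpl.
  - repeat split; auto; lia.
  - unfold orbit in IH |- *. simpl. destruct (Nat.iter n (step a b X Y) (x0, y0)) as [x y].
    simpl in *. destruct IH as [I1 [I2 [I3 [I4 [I5 I6]]]]].
    assert (0 <= a*Y*x)%Z by (apply Z.mul_nonneg_nonneg; lia).
    assert (0 <= b*Y*y)%Z by (apply Z.mul_nonneg_nonneg; lia).
    assert (X*x >= x)%Z by nia. assert (X*y >= 2*y)%Z by nia.
    assert (a*Y*x >= x)%Z by nia.
    repeat split; try lia.
    + rewrite <- I5.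
      replace (a * (X * x + b * Y * y) * (X * x + b * Y * y) - b * (a * Y * x + X * y) * (a * Y * x + X * y))%Z
        with ((a*x*x - b*y*y) * (X*X - a*b*Y*Y))%Z by ring. rewrite HP. ring.
    + set (g := Z.gcd (X * x + b * Y * y) (a * Y * x + X * y)).
      assert (G1 : (g | X * x + b * Y * y)%Z) by apply Z.gcd_divide_l.
      assert (G2 : (g | a * Y * x + X * y)%Z) by apply Z.gcd_divide_r.
      assert (Gx : (g | x)%Z).
      { replace x with (X * (X * x + b * Y * y) - b*Y*(a * Y * x + X * y))%Z.
        - apply Z.divide_sub_r; apply Z.divide_mul_r; auto.
        - replace (X * (X * x + b * Y * y) - b*Y*(a * Y * x + X * y))%Z with ((X*X - a*b*Y*Y) * x)%Z by ring.
          rewrite HP. ring. }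
      assert (Gy : (g | y)%Z).
      { replace y with (X * (a * Y * x + X * y) - a*Y*(X * x + b * Y * y))%Z.
        - apply Z.divide_sub_r; apply Z.divide_mul_r; auto.
        - replace (X * (a * Y * x + X * y) - a*Y*(X * x + b * Y * y))%Z with ((X*X - a*b*Y*Y) * y)%Z by ring.
          rewrite HP. ring. }
      assert (G3 : (g | 1)%Z) by (rewrite <- I6; apply Z.gcd_greatest; auto).
      apply Z.divide_1_r_nonneg in G3; auto. apply Z.gcd_nonneg.
Qed.

Lemma sum_ge (l : list (Z * Z)) (g : Z * Z -> R) (pt : Z * Z) :
  In pt l -> (forall z, 0 <= g z) -> g pt <= fold_right Rplus 0 (map g l).
Proof.
  intros Hin Hg. induction l as [|h t IH]; simpl in *; [contradiction|].
  assert (0 <= fold_right Rplus 0 (map g t)).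
  { clear IH Hin. induction t; simpl; [lra|]. pose proof (Hg a). lra. }
  destruct Hin as [->|Hin].
  - lra.
  - pose proof (IH Hin). pose proof (Hg h). lra.
Qed.

Lemma in_rat_points (x y : Z) (B : R) :
  (1 <= y <= x)%Z -> Z.gcd x y = 1%Z -> IZR x <= B -> In (x, y) (rat_points B).
Proof.
  intros Hxy Hg HB. unfold rat_points. apply filter_In. split.
  - destruct (archimed B) as [A _].
    assert (HK : (x < up B)%Z) by (apply lt_IZR; lra).
    set (K := up B) in *.
    unfold box. apply in_prod.
    + apply in_map_iff. exists (x + K)%Z. split; [ring|].
      apply in_map_iff. exists (Z.to_nat (x + K)). split; [apply Z2Nat.id; lia|].
      apply in_seq. lia.
    + apply in_map_iff. exists (y - 1)%Z. split; [ring|].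
      apply in_map_iff. exists (Z.to_nat (y - 1)). split; [apply Z2Nat.id; lia|].
      apply in_seq. lia.
  - simpl. rewrite Hg. simpl.
    destruct (Rle_dec (height x y) B) as [_|N]; auto. exfalso. apply N.
    unfold height. rewrite !Z.abs_eq by lia. unfold Rmax.
    destruct (Rle_dec (IZR x) (IZR y)); auto. assert (IZR y <= IZR x) by (apply IZR_le; lia). lra.
Qed.

Lemma core (th mu eps c K del x y : R) :
  1 < th -> 0 <= mu -> 0 < eps -> c = 2*th*eps - th*th*mu -> K = 2*th*mu + mu + eps ->
  0 < del -> del <= 1 -> del <= th - 1 -> del * K <= c ->
  1 <= y -> 0 <= x -> Rabs ((x - th*y) * (x + th*y)) = mu -> Rabs (x - th*y) <= del ->
  y <= x /\ x * x * Rabs (x - th*y) <= eps * y.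
Proof.
  intros Hth Hmu Heps Hc HK Hd Hd1 Hd2 HdK Hy Hx HD Hdl.
  set (D := x - th*y) in *.
  assert (Ex : x = th*y + D) by (unfold D; ring).
  assert (HDa : -del <= D <= del) by (unfold Rabs in Hdl; destruct (Rcase_abs D); lra).
  split; [nra|].
  set (S := x + th*y) in *.
  assert (HS : 0 < S) by (unfold S; nra).
  rewrite Rabs_mult, (Rabs_right S) in HD by lra.
  set (A := Rabs D) in *.
  assert (HA : 0 <= A) by apply Rabs_pos.
  assert (Key : eps * y * S - x * x * mu = c*y*y + eps*y*D - 2*th*y*D*mu - D*D*mu).
  { unfold S. rewrite Hc, Ex. ring. }
  assert (B1 : eps*y*D - 2*th*y*D*mu - D*D*mu >= - (A * (eps*y + 2*th*y*mu + A*mu))).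
  { unfold A. destruct (Rle_dec 0 D).
    - rewrite Rabs_right by lra.
      assert (0 <= eps*y*D) by (apply Rmult_le_pos; [apply Rmult_le_pos|]; lra). nra.
    - rewrite Rabs_left by lra.
      assert (0 <= th*y*mu*(-D)) by (apply Rmult_le_pos; [apply Rmult_le_pos; [apply Rmult_le_pos|]|]; lra). nra. }
  assert (A1 : A <= 1) by lra.
  assert (B2 : A * (eps*y + 2*th*y*mu + A*mu) <= A * y * K).
  { replace (A*y*K) with (A*(y*K)) by ring. rewrite HK. apply Rmult_le_compat_l; auto.
    assert (A*mu <= y*mu) by (apply Rmult_le_compat_r; lra). nra. }
  assert (B3 : A * y * K <= c * y).
  { assert (0 <= K) by (rewrite HK; nra).
    apply Rle_trans with (del * K * y); [|nra]. 
    replace (A * y * K) with (A * K * y) by ring. apply Rmult_le_compat_r; [lra|]. nra. }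
  assert (Hcp : 0 <= c) by (assert (0 <= K) by (rewrite HK; nra); assert (0 <= del*K) by (apply Rmult_le_pos; lra); lra).
  assert (B4 : c * y <= c * y * y).
  { assert (0 <= c*y*(y-1)) by (apply Rmult_le_pos; [apply Rmult_le_pos|]; lra). nra. }
  assert (M : x * x * mu <= eps * y * S) by lra.
  rewrite <- HD in M.
  apply (Rmult_le_reg_r S); auto. nra.
Qed.

Theorem mainTheorem8 (a b : Z) (eps eta : R) :
  (0 < a)%Z -> (0 < b)%Z -> Z.gcd a b = 1%Z ->
  1 < sqrt (IZR b / IZR a) ->
  (forall p q : Z, q <> 0%Z -> sqrt (IZR b / IZR a) <> IZR p / IZR q) ->
  0 < eta -> eta < eps ->
  (exists m x y : Z,
      Z.gcd x y = 1%Z /\ (a * x ^ 2 - b * y ^ 2)%Z = m /\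
      2 * sqrt (IZR a * IZR b) * / (sqrt (IZR b / IZR a)) ^ 2 * eta < IZR (Z.abs m) /\
      IZR (Z.abs m) < 2 * sqrt (IZR a * IZR b) * / (sqrt (IZR b / IZR a)) ^ 2 * eps) ->
  exists Bn : nat -> R,
    cv_infty Bn /\
    forall n : nat, (1 <= n)%nat ->
      0 < Bn n /\ 1 <= delta (sqrt (IZR b / IZR a)) (Bn n) (1 / 2) (chi eps eta).
Proof.
  intros Ha Hb Hg Hth Hirr Heta Hee [m [x0 [y0 [Hg0 [Hm [Hl Hu]]]]]].
  set (th := sqrt (IZR b / IZR a)) in *.
  assert (Ra : 0 < IZR a) by (apply IZR_lt; lia).
  assert (Rb : 0 < IZR b) by (apply IZR_lt; lia).
  assert (Hth2 : th * th = IZR b / IZR a).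
  { unfold th. apply sqrt_sqrt. apply Rlt_le. apply Rdiv_lt_0_compat; lra. }
  assert (Hsab : sqrt (IZR a * IZR b) = IZR a * th).
  { rewrite <- (sqrt_square (IZR a * th)) by nra. f_equal.
    replace (IZR a * th * (IZR a * th)) with (IZR a * IZR a * (th * th)) by ring.
    rewrite Hth2. field. lra. }
  set (mu := IZR (Z.abs m) / IZR a).
  assert (Hmu0 : 0 <= mu) by (unfold mu; apply Rmult_le_pos;
    [apply IZR_le; lia | apply Rlt_le, Rinv_0_lt_compat; lra]).
  assert (Hmu : th * th * mu < 2 * th * eps).
  { rewrite Hsab in Hu. simpl in Hu.
    assert (E : th * (2 * (IZR a * th) * / (th * (th * 1)) * eps) = 2 * IZR a * eps) by (field; lra).
    assert (th * IZR (Z.abs m) < 2 * IZR a * eps).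
    { rewrite <- E. apply Rmult_lt_compat_l; lra. }
    unfold mu. replace (th * th * (IZR (Z.abs m) / IZR a)) with (th * (th * IZR (Z.abs m)) / IZR a) by (field; lra).
    apply (Rmult_lt_reg_r (IZR a)); auto. unfold Rdiv. rewrite Rmult_assoc, Rinv_l, Rmult_1_r by lra.
    replace (2 * th * eps * IZR a) with (th * (2 * IZR a * eps)) by ring.
    apply Rmult_lt_compat_l; lra. }
  set (c := 2 * th * eps - th * th * mu).
  set (K := 2 * th * mu + mu + eps).
  assert (Hc : 0 < c) by (unfold c; lra).
  assert (HK : 0 < K) by (unfold K; nra).
  set (del := Rmin 1 (Rmin (th - 1) (c / K))).
  assert (Hdel : 0 < del /\ del <= 1 /\ del <= th - 1 /\ del * K <= c).
  { unfold del. assert (0 < c / K) by (apply Rdiv_lt_0_compat; lra).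
    pose proof (Rmin_l 1 (Rmin (th - 1) (c / K))). pose proof (Rmin_r 1 (Rmin (th - 1) (c / K))).
    pose proof (Rmin_l (th - 1) (c / K)). pose proof (Rmin_r (th - 1) (c / K)).
    repeat split; try lra.
    - apply Rmin_glb_lt; [lra|]. apply Rmin_glb_lt; lra.
    - apply Rle_trans with (c / K * K); [apply Rmult_le_compat_r; lra|]. right; field; lra. }
  destruct Hdel as [Hd0 [Hd1 [Hd2 HdK]]].
  assert (Hirr' : forall p q : Z, (1 <= q)%Z -> IZR q * sqrt (IZR (a * b)) <> IZR p).
  { intros p q Hq E. rewrite mult_IZR, Hsab in E.
    apply (Hirr p (a * q)%Z); [nia|]. rewrite mult_IZR.
    assert (1 <= IZR q) by (apply IZR_le; lia).
    rewrite <- E. field. lra. }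
  destruct (pell (a * b) ltac:(nia) Hirr') as [X [Y [HP HY]]].
  set (X1 := Z.abs X). set (Y1 := Z.abs Y).
  assert (HXX : (X1 * X1 = X * X)%Z) by (unfold X1; rewrite <- Z.abs_mul; apply Z.abs_eq; nia).
  assert (HYY : (Y1 * Y1 = Y * Y)%Z) by (unfold Y1; rewrite <- Z.abs_mul; apply Z.abs_eq; nia).
  assert (HP1 : (X1 * X1 - a * b * Y1 * Y1 = 1)%Z).
  { replace (a * b * Y1 * Y1)%Z with (a * b * (Y1 * Y1))%Z by ring. rewrite HXX, HYY. rewrite <- HP. ring. }
  assert (HY1 : (1 <= Y1)%Z) by (unfold Y1; lia).
  assert (Hba : (a < b)%Z).
  { apply lt_IZR. assert (1 < th * th) by nra. rewrite Hth2 in H.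
    apply (Rmult_lt_reg_r (/ IZR a)); [apply Rinv_0_lt_compat; lra|].
    rewrite Rinv_r by lra. exact H. }
  assert (HX1 : (2 <= X1)%Z).
  { assert (0 <= X1)%Z by (unfold X1; lia). assert (1 <= Y1 * Y1)%Z by nia. nia. }
  set (x1 := Z.abs x0). set (y1 := Z.abs y0).
  assert (Hg1 : Z.gcd x1 y1 = 1%Z) by (unfold x1, y1; rewrite Z.gcd_abs_l, Z.gcd_abs_r; auto).
  assert (Hs1 : (1 <= x1 + y1)%Z).
  { unfold x1, y1. destruct (Z.eq_dec x0 0) as [->|]; [|lia].
    destruct (Z.eq_dec y0 0) as [->|]; [|lia]. rewrite Z.gcd_0_l in Hg0. simpl in Hg0. lia. }
  assert (Hm1 : (a * x1 * x1 - b * y1 * y1 = m)%Z).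
  { rewrite <- Hm. unfold x1, y1.
    assert (E1 : (Z.abs x0 * Z.abs x0 = x0*x0)%Z) by (rewrite <- Z.abs_mul; apply Z.abs_eq; nia).
    assert (E2 : (Z.abs y0 * Z.abs y0 = y0*y0)%Z) by (rewrite <- Z.abs_mul; apply Z.abs_eq; nia).
    replace (a * Z.abs x0 * Z.abs x0 - b * Z.abs y0 * Z.abs y0)%Z with (a * (Z.abs x0 * Z.abs x0) - b * (Z.abs y0 * Z.abs y0))%Z by ring.
    rewrite E1, E2. ring. }
  pose proof (orbit_inv a b X1 Y1 x1 y1 ltac:(lia) ltac:(lia) HX1 HY1 HP1 ltac:(unfold x1; lia) ltac:(unfold y1; lia) Hs1 Hg1) as Inv.
  set (N0 := S (Z.to_nat (up (mu / del)))).
  set (P := fun n : nat => orbit a b X1 Y1 x1 y1 (n + N0)).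
  assert (Fact : forall n, (1 <= snd (P n) <= fst (P n))%Z /\ Z.gcd (fst (P n)) (snd (P n)) = 1%Z /\
      INR n <= IZR (snd (P n)) /\ IZR (fst (P n)) - th * IZR (snd (P n)) <> 0 /\
      IZR (fst (P n)) * IZR (fst (P n)) * Rabs (IZR (fst (P n)) - th * IZR (snd (P n))) <= eps * IZR (snd (P n))).
  { intros n. destruct (Inv (n + N0)%nat) as [I1 [I2 [I3 [I4 [I5 I6]]]]].
    fold (P n) in I1, I2, I3, I4, I5, I6.
    destruct (P n) as [x y]. simpl in *. rewrite Hm1 in I5.
    assert (Hy1 : (1 <= y)%Z) by (unfold N0 in I4; lia).
    assert (Ry1 : 1 <= IZR y) by (apply IZR_le; lia).
    assert (Rx0 : 0 <= IZR x) by (apply IZR_le; lia).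
    assert (Hyn : INR (n + N0) <= IZR y) by (rewrite INR_IZR_INZ; apply IZR_le; lia).
    assert (HyN : mu / del < IZR y).
    { apply Rlt_le_trans with (INR (n + N0)); auto.
      rewrite plus_INR. unfold N0. rewrite S_INR. destruct (archimed (mu / del)) as [A _].
      pose proof (pos_INR n).
      destruct (Z_le_gt_dec 0 (up (mu / del))) as [L|L].
      - rewrite (INR_IZR_INZ (Z.to_nat _)), Z2Nat.id by lia. lra.
      - assert (0 <= mu / del) by (apply Rmult_le_pos; [lra|apply Rlt_le, Rinv_0_lt_compat; lra]).
        apply Z.gt_lt in L. apply IZR_lt in L. pose proof (pos_INR (Z.to_nat (up (mu / del)))). lra. }
    assert (Id : (IZR x - th * IZR y) * (IZR x + th * IZR y) = IZR m / IZR a).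
    { replace ((IZR x - th * IZR y) * (IZR x + th * IZR y)) with (IZR x * IZR x - th * th * (IZR y * IZR y)) by ring.
      rewrite Hth2. rewrite <- I5. rewrite minus_IZR, !mult_IZR. field. lra. }
    assert (IdA : Rabs ((IZR x - th * IZR y) * (IZR x + th * IZR y)) = mu).
    { rewrite Id. unfold mu. rewrite abs_IZR. unfold Rdiv. rewrite Rabs_mult, Rabs_inv.
      rewrite (Rabs_right (IZR a)) by lra. reflexivity. }
    assert (Hsm : Rabs (IZR x - th * IZR y) <= del).
    { rewrite Rabs_mult in IdA. rewrite (Rabs_right (IZR x + th * IZR y)) in IdA by nra.
      assert (Hmd : mu < del * IZR y).
      { apply (Rmult_lt_reg_r (/ del)); [apply Rinv_0_lt_compat; lra|].
        replace (del * IZR y * / del) with (IZR y) by (field; lra). exact HyN. }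
      pose proof (Rabs_pos (IZR x - th * IZR y)).
      assert (Rabs (IZR x - th * IZR y) * IZR y <= mu) by (rewrite <- IdA; apply Rmult_le_compat_l; nra).
      nra. }
    destruct (core th mu eps c K del (IZR x) (IZR y) Hth Hmu0 ltac:(lra) eq_refl eq_refl Hd0 Hd1 Hd2 HdK Ry1 Rx0 IdA Hsm)
      as [C1 C2].
    split; [split; [lia|apply le_IZR; lra]|].
    split; auto. split; [rewrite plus_INR in Hyn; pose proof (pos_INR N0); lra|].
    split; auto.
    intro E. apply (Hirr x y); [lia|]. field_simplify_eq; [lra|lra]. }
  exists (fun n => sqrt (eps * IZR (snd (P n)) / Rabs (IZR (fst (P n)) - th * IZR (snd (P n))))).
  assert (Main : forall n, 0 < sqrt (eps * IZR (snd (P n)) / Rabs (IZR (fst (P n)) - th * IZR (snd (P n)))) /\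
      IZR (fst (P n)) <= sqrt (eps * IZR (snd (P n)) / Rabs (IZR (fst (P n)) - th * IZR (snd (P n)))) /\
      1 <= delta th (sqrt (eps * IZR (snd (P n)) / Rabs (IZR (fst (P n)) - th * IZR (snd (P n))))) (1/2) (chi eps eta)).
  { intros n. destruct (Fact n) as [F1 [F2 [F3 [F4 F5]]]].
    destruct (P n) as [x y]. simpl in *.
    assert (Ry1 : 1 <= IZR y) by (apply IZR_le; lia).
    assert (Rx0 : 0 <= IZR x) by (apply IZR_le; lia).
    set (A := Rabs (IZR x - th * IZR y)) in *.
    assert (HA : 0 < A) by (apply Rabs_pos_lt; auto).
    set (Bv := eps * IZR y / A).
    assert (HBv : 0 < Bv) by (apply Rdiv_lt_0_compat; nra).
    assert (HB : 0 < sqrt Bv) by (apply sqrt_lt_R0; auto).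
    assert (Hxle : IZR x <= sqrt Bv).
    { rewrite <- (sqrt_square (IZR x)) by lra. apply sqrt_le_1_alt.
      apply Rmult_le_reg_r with A; auto. unfold Bv. replace (eps * IZR y / A * A) with (eps * IZR y) by (field; lra).
      exact F5. }
    split; [exact HB|]. split; [exact Hxle|].
    unfold delta.
    eapply Rle_trans; [|apply (sum_ge _ _ (x, y))].
    - simpl. replace (1 / (1 / 2)) with (INR 2) by (simpl; field).
      rewrite Rpower_pow by auto. simpl. rewrite Rmult_1_r, sqrt_sqrt by lra.
      assert (E : Rabs (Bv * (IZR x / IZR y - th)) = eps).
      { unfold Bv. replace (eps * IZR y / A * (IZR x / IZR y - th)) with (eps * ((IZR x - th * IZR y) / A)) by (field; lra).
        rewrite Rabs_mult, Rabs_right by lra. unfold Rdiv. rewrite Rabs_mult, Rabs_inv. fold A.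
        rewrite (Rabs_right A) by lra. field. lra. }
      unfold chi. rewrite E. destruct (Rlt_dec eta eps); [|lra]. destruct (Rle_dec eps eps); lra.
    - apply in_rat_points; auto.
    - intros z. unfold chi. destruct (Rlt_dec _ _); [destruct (Rle_dec _ _)|]; lra. }
  split.
  - intros M. exists (S (Z.to_nat (up M))). intros n Hn.
    destruct (Main n) as [_ [M2 _]]. destruct (Fact n) as [F1 [_ [F3 _]]].
    assert (INR n <= IZR (fst (P n))) by (apply Rle_trans with (IZR (snd (P n))); auto; apply IZR_le; lia).
    assert (M < INR n).
    { apply Rlt_le_trans with (INR (S (Z.to_nat (up M)))); [|apply le_INR; lia].
      rewrite S_INR. destruct (archimed M) as [A _].
      destruct (Z_le_gt_dec 0 (up M)) as [L|L].
      - rewrite INR_IZR_INZ, Z2Nat.id by lia. lra.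
      - apply Z.gt_lt in L. apply IZR_lt in L. pose proof (pos_INR (Z.to_nat (up M))). lra. }
    lra.
  - intros n _. destruct (Main n) as [M1 [_ M3]]. split; auto.
Qed.
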